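(* Two quantity spaces over the same field $K$ are isomorphic (as scalable monoids) if and only if they have the same rank.
   Context: A scalable monoid over a (unital, associative) ring $R$ is a monoid $X$ (identity $1_X$, product written $xy$) together with a map $R\times X\to X$, $(\alpha,x)\mapsto\alpha\cdot x$, such that $1\cdot x=x$, $\alpha\cdot(\beta\cdot x)=\alpha\beta\cdot x$ and $\alpha\cdot(xy)=(\alpha\cdot x)y=x(\alpha\cdot y)$. A quantity space over a field $K$ is a commutative scalable monoid $Q$ over $K$ for which there exists a basis, i.e. a finite set $\{e_1,\ldots,e_n\}$ of invertible elements of $Q$ such that every $x\in Q$ has a unique expansion $x=\mu\cdot\prod_{i=1}^n e_i^{k_i}$ with $\mu\in K$ and $k_1,\ldots,k_n\in\mathbb{Z}$. All bases of a quantity space have the same cardinality $n$, called its rank. An isomorphism of scalable monoids $Q\to Q'$ over $K$ is a bijection $\phi$ with $\phi(1_Q)=1_{Q'}$, $\phi(xy)=\phi(x)\phi(y)$ and $\phi(\lambda\cdot x)=\lambda\cdot\phi(x)$ for all $x,y\in Q$, $\lambda\in K$. *)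

(* Defs.v *)
From HB Require Import structures.
From mathcomp Require Import all_boot all_order all_algebra.
From Stdlib Require Import ClassicalEpsilon.
Set Implicit Arguments. Unset Strict Implicit. Unset Printing Implicit Defensive.
Import GRing.Theory.
Local Open Scope ring_scope.

Record ScalableMonoid (R : nzRingType) := {
  sm_car :> Type;
  sm_one : sm_car;
  sm_mul : sm_car -> sm_car -> sm_car;
  sm_scale : R -> sm_car -> sm_car;
  sm_mulA : forall x y z, sm_mul x (sm_mul y z) = sm_mul (sm_mul x y) z;
  sm_mul1x : forall x, sm_mul sm_one x = x;
  sm_mulx1 : forall x, sm_mul x sm_one = x;
  sm_scale1 : forall x, sm_scale 1 x = x;
  sm_scaleA : forall a b x, sm_scale a (sm_scale b x) = sm_scale (a * b) x;
  sm_scale_mull : forall a x y, sm_scale a (sm_mul x y) = sm_mul (sm_scale a x) y;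
  sm_scale_mulr : forall a x y, sm_scale a (sm_mul x y) = sm_mul x (sm_scale a y)
}.
Arguments sm_one {R s}.
Arguments sm_mul {R s}.
Arguments sm_scale {R s}.

Section Basis.
Variables (R : nzRingType) (X : ScalableMonoid R).

Definition zpow (e einv : X) (k : int) : X :=
  match k with
  | Posz m => iter m (sm_mul e) (sm_one)
  | Negz m => iter m.+1 (sm_mul einv) (sm_one)
  end.

Definition expansion n (e einv : 'I_n -> X) (mu : R) (k : {ffun 'I_n -> int}) : X :=
  sm_scale mu (\big[sm_mul / sm_one]_(i < n) zpow (e i) (einv i) (k i)).

Definition is_basis n (e : 'I_n -> X) : Prop :=
  exists einv : 'I_n -> X,
    (forall i, sm_mul (e i) (einv i) = sm_one /\ sm_mul (einv i) (e i) = sm_one) /\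
    (forall x, exists! p : R * {ffun 'I_n -> int}, expansion e einv p.1 p.2 = x).

Definition has_basis_of_size n : Prop := exists e : 'I_n -> X, is_basis e.
End Basis.

Definition is_quantity_space (K : fieldType) (Q : ScalableMonoid K) : Prop :=
  (forall x y : Q, sm_mul x y = sm_mul y x) /\ exists n, has_basis_of_size Q n.

(* rank: the (minimal, hence by the paper's invariance theorem the common)
   cardinality of a basis. *)
Definition rank (K : fieldType) (Q : ScalableMonoid K) : nat :=
  epsilon (inhabits 0%N)
    (fun n => has_basis_of_size Q n /\ forall m, has_basis_of_size Q m -> (n <= m)%N).

Definition sm_isomorphic (K : fieldType) (Q Q' : ScalableMonoid K) : Prop :=
  exists phi : Q -> Q',
    bijective phi /\ phi sm_one = sm_one /\
    (forall x y, phi (sm_mul x y) = sm_mul (phi x) (phi y)) /\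
    (forall (l : K) x, phi (sm_scale l x) = sm_scale l (phi x)).

(* Main.v *)
From HB Require Import structures.
Require Import Defs.
From mathcomp Require Import all_boot all_order all_algebra.
From mathcomp Require Import zify.
From Stdlib Require Import ClassicalEpsilon.
Set Implicit Arguments. Unset Strict Implicit. Unset Printing Implicit Defensive.
Import GRing.Theory.
Local Open Scope ring_scope.

Definition pmul (K : fieldType) n (p q : K * {ffun 'I_n -> int}) : K * {ffun 'I_n -> int} :=
  (p.1 * q.1, [ffun i => p.2 i + q.2 i]).

Section Model.
Variables (K : fieldType) (Q : ScalableMonoid K).
Hypothesis mulC : forall x y : Q, sm_mul x y = sm_mul y x.
HB.instance Definition _ := Monoid.isComLaw.Build Q sm_one sm_mul (@sm_mulA _ Q) mulC (@sm_mul1x _ Q).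

Definition pw (x : Q) m := iter m (sm_mul x) sm_one.

Lemma pwD x a b : pw x (a + b)%N = sm_mul (pw x a) (pw x b).
Proof.
elim: a => [|a IH] /=; first by rewrite add0n /pw /= sm_mul1x.
by rewrite IH sm_mulA.
Qed.

Section Z.
Variables (a b : Q).
Hypothesis hab : sm_mul a b = sm_one.

Lemma zpow_f (m k : nat) : zpow a b (m%:Z - k%:Z) = sm_mul (pw a m) (pw b k).
Proof.
elim: k m => [|k IH] m.
  by rewrite subr0 /= sm_mulx1.
case: m => [|m].
  by rewrite sub0r -NegzE /= sm_mul1x.
have -> : (m.+1%:Z - k.+1%:Z = m%:Z - k%:Z)%R by lia.
rewrite IH; change (pw a m.+1) with (sm_mul a (pw a m)).
change (pw b k.+1) with (sm_mul b (pw b k)).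
rewrite -sm_mulA [sm_mul (pw a m) (sm_mul b _)]sm_mulA [sm_mul (pw a m) b]mulC.
by rewrite -sm_mulA sm_mulA hab sm_mul1x.
Qed.

Lemma int_dec (k : int) : exists m l : nat, k = (m%:Z - l%:Z)%R.
Proof.
case: k => m; first by exists m, 0%N; rewrite subr0.
by exists 0%N, m.+1; rewrite sub0r NegzE.
Qed.

Lemma zpowD k l : zpow a b (k + l) = sm_mul (zpow a b k) (zpow a b l).
Proof.
have [m1 [l1 ->]] := int_dec k.
have [m2 [l2 ->]] := int_dec l.
have -> : ((m1%:Z - l1%:Z) + (m2%:Z - l2%:Z) = (m1 + m2)%N%:Z - (l1 + l2)%N%:Z)%R by lia.
by rewrite !zpow_f !pwD Monoid.mulmACA.
Qed.
End Z.

Lemma model n (e : 'I_n -> Q) :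
  is_basis e ->
  exists (psi : K * {ffun 'I_n -> int} -> Q) (g : Q -> K * {ffun 'I_n -> int}),
    cancel psi g /\ cancel g psi /\
    (forall p q, psi (pmul p q) = sm_mul (psi p) (psi q)) /\
    psi (1, [ffun => 0]) = sm_one /\
    (forall l p, sm_scale l (psi p) = psi (l * p.1, p.2)).
Proof.
move=> [einv [hinv huniq]].
pose psi (p : K * {ffun 'I_n -> int}) := expansion e einv p.1 p.2.
pose g (x : Q) := epsilon (inhabits (1, [ffun => 0])) (fun p => psi p = x).
have gK : cancel g psi.
  move=> x; rewrite /g; apply: (epsilon_spec (inhabits _) (fun p => psi p = x)).
  by have [p [Hp _]] := huniq x; exists p.
exists psi, g; split.
  move=> p; have [p0 [_ Hu]] := huniq (psi p).
  have h1 : p0 = g (psi p) by apply: Hu; apply: gK.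
  have h2 : p0 = p by apply: Hu.
  by rewrite -h1 h2.
split => //; split; last split.
- move=> [mu k] [nu l]; rewrite /psi /expansion /pmul /=.
  rewrite -sm_scale_mull -sm_scale_mulr sm_scaleA -big_split /=.
  congr sm_scale; apply: eq_bigr => i _.
  by rewrite ffunE zpowD //; case: (hinv i).
- rewrite /psi /expansion /= sm_scale1 big1 // => i _.
  by rewrite ffunE.
- by move=> l [mu k]; rewrite /psi /expansion /= sm_scaleA.
Qed.
End Model.

Section Transport.
Variables (K : fieldType) (Q Q' : ScalableMonoid K) (phi : Q -> Q') (phi' : Q' -> Q).
Hypotheses (c1 : cancel phi phi') (c2 : cancel phi' phi) (h1 : phi sm_one = sm_one)
  (hM : forall x y, phi (sm_mul x y) = sm_mul (phi x) (phi y))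
  (hZ : forall (l : K) x, phi (sm_scale l x) = sm_scale l (phi x)).

Lemma phi_iter (a : Q) m : phi (iter m (sm_mul a) sm_one) = iter m (sm_mul (phi a)) sm_one.
Proof. by elim: m => [|m IH] //=; rewrite hM IH. Qed.

Lemma phi_zpow (a b : Q) k : phi (zpow a b k) = zpow (phi a) (phi b) k.
Proof. by case: k => m; apply: phi_iter. Qed.

Lemma transport_basis m : has_basis_of_size Q m -> has_basis_of_size Q' m.
Proof.
move=> [e [einv [hinv huniq]]].
have hexp : forall mu k, phi (expansion e einv mu k) = expansion (phi \o e) (phi \o einv) mu k.
  move=> mu k; rewrite /expansion hZ (big_morph phi hM h1); congr sm_scale.
  by apply: eq_bigr => i _; rewrite phi_zpow.
exists (phi \o e), (phi \o einv); split.
  by move=> i /=; rewrite -!hM; case: (hinv i) => -> ->.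
move=> y; have [p0 [Hp0 Hu]] := huniq (phi' y).
exists p0; split; first by rewrite -hexp Hp0 c2.
move=> q Hq; apply: Hu.
by rewrite -[expansion _ _ _ _]c1 hexp Hq.
Qed.

Lemma inv_hom : [/\ phi' sm_one = sm_one,
  (forall x y, phi' (sm_mul x y) = sm_mul (phi' x) (phi' y)) &
  (forall (l : K) x, phi' (sm_scale l x) = sm_scale l (phi' x))].
Proof.
split.
- by rewrite -h1 c1.
- by move=> x y; rewrite -{1}(c2 x) -{1}(c2 y) -hM c1.
- by move=> l x; rewrite -{1}(c2 x) -hZ c1.
Qed.
End Transport.

Lemma exmin (P : nat -> Prop) : (exists n, P n) -> exists n, P n /\ forall m, P m -> (n <= m)%N.
Proof.
move=> hex.
pose pb m := if excluded_middle_informative (P m) then true else false.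
have pbP m : pb m <-> P m.
  by rewrite /pb; case: excluded_middle_informative.
have hb : exists m, pb m by case: hex => m Hm; exists m; apply/pbP.
case: (ex_minnP hb) => m Hm Hmin; exists m; split; first by apply/pbP.
by move=> k Hk; apply: Hmin; apply/pbP.
Qed.

Lemma rank_spec (K : fieldType) (Q : ScalableMonoid K) : is_quantity_space Q ->
  has_basis_of_size Q (rank Q) /\ forall m, has_basis_of_size Q m -> (rank Q <= m)%N.
Proof.
move=> [_ hex]; rewrite /rank.
exact: (epsilon_spec (inhabits 0%N) (fun n => has_basis_of_size Q n /\ forall m, has_basis_of_size Q m -> (n <= m)%N) (exmin hex)).
Qed.

Theorem proposition3p23 (K : fieldType) (Q Q' : ScalableMonoid K) :
  is_quantity_space Q -> is_quantity_space Q' ->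
  (sm_isomorphic Q Q' <-> rank Q = rank Q').
Proof.
move=> hQ hQ'; have [bQ mQ] := rank_spec hQ; have [bQ' mQ'] := rank_spec hQ'.
split.
  move=> [phi [[phi' c1 c2] [h1 [hM hZ]]]].
  have [h1' hM' hZ'] := inv_hom c1 c2 h1 hM hZ.
  apply/eqP; rewrite eqn_leq; apply/andP; split.
    by apply: mQ; apply: (transport_basis c2 c1 h1' hM' hZ').
  by apply: mQ'; apply: (transport_basis c1 c2 h1 hM hZ).
move=> Hr; rewrite Hr in bQ.
case: bQ => e He; case: bQ' => e' He'.
have [psi [g [pg [gp [pM [p1 pZ]]]]]] := model hQ.1 He.
have [psi' [g' [pg' [gp' [pM' [p1' pZ']]]]]] := model hQ'.1 He'.
exists (psi' \o g); split.
  by exists (psi \o g') => x /=; [rewrite pg' gp | rewrite pg gp'].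
split; first by rewrite /= -p1 pg p1'.
split.
  by move=> x y /=; rewrite -{1}(gp x) -{1}(gp y) -pM pg pM'.
by move=> l x /=; rewrite -{1}(gp x) pZ pg -pZ'.
Qed.
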